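(* Let $T\in\mathcal L(\mathcal P_n)$, $T\ne 0$, and suppose there is a constant $C>0$ such that for each nonconstant $f\in\mathcal P_n$ there exist $u\in Z(f)$ and $v\in Z(Tf)$ with $|u-v|\le C$. Then $T\phi_0$ is a nonzero constant polynomial $c$, and the matrix of $T$ with respect to the basis $\{\phi_0,\dots,\phi_n\}$ is upper triangular with all diagonal entries equal to $c$; i.e. for each $m=0,\dots,n$, $T\phi_m\in\operatorname{span}\{\phi_0,\dots,\phi_m\}$ and the coefficient of $\phi_m$ in $T\phi_m$ equals $c$.
   Context: Let $n\ge 1$ be an integer and $\mathcal P_n$ the complex vector space of polynomials in one complex variable of degree at most $n$; $\mathcal L(\mathcal P_n)$ is the set of linear operators $\mathcal P_n\to\mathcal P_n$; $\phi_k(z)=z^k/k!$ for $k=0,\dots,n$. For a nonzero $f$, $Z(f)$ is the multiset of roots of $f$ (with multiplicity; empty for nonzero constants); $Z(0)=\mathbb C$. *)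

(* Defs.v *)
From HB Require Import structures.
From mathcomp Require Import all_boot all_order all_algebra.
From mathcomp Require Import reals complex.
Set Implicit Arguments. Unset Strict Implicit. Unset Printing Implicit Defensive.
Import Order.TTheory GRing.Theory Num.Theory.
Local Open Scope ring_scope.

Definition phi (F : fieldType) (k : nat) : {poly F} := (k`!%:R)^-1 *: 'X^k.

Definition inPn (F : fieldType) (n : nat) (p : {poly F}) : bool := (size p <= n.+1)%N.

(* Main.v *)
Require Import Defs.
From HB Require Import structures.
From mathcomp Require Import all_boot all_order all_algebra.
From mathcomp Require Import reals complex.
From mathcomp Require Import ring zify.
Import Order.TTheory GRing.Theory Num.Theory.
Local Open Scope ring_scope.

Lemma D_bound (F : numFieldType) (C w s : F) j : 0 <= C -> 1 <= `|w| -> `|s| <= C ->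
  `|(w + s)^+j - w^+j| * `|w| <= ((1 + C)^+j - 1) * `|w|^+j.
Proof.
move=> C0 w1 sC.
have x0 : 0 <= `|w| by [].
have C1 : 1 <= 1 + C by rewrite lerDl.
elim: j => [|j IH]; first by rewrite !expr0 !subrr normr0 !mul0r.
have -> : (w + s)^+j.+1 - w^+j.+1 = (w+s)*((w+s)^+j - w^+j) + s*w^+j.
  by rewrite !exprS; ring.
set y := `|(w + s)^+j - w^+j|.
set K := (1 + C)^+j - 1.
have K0 : 0 <= K by rewrite subr_ge0 exprn_ege1.
have ws : `|w + s| <= (1 + C) * `|w|.
  apply: le_trans (ler_normD _ _) _.
  rewrite mulrDl mul1r lerD2l.
  apply: le_trans sC _.
  by rewrite -{1}(mulr1 C) ler_wpM2l.
apply: (le_trans (y := (`|w+s| * y + C * `|w|^+j) * `|w|)).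
  rewrite ler_wpM2r //.
  apply: le_trans (ler_normD _ _) _.
  rewrite !normrM normrX lerD2l ler_wpM2r //.
  by rewrite exprn_ge0.
rewrite mulrDl -mulrA.
apply: (le_trans (y := (1 + C) * `|w| * (K * `|w|^+j) + C * `|w| ^+ j * `|w|)).
  rewrite lerD2r.
  by apply: ler_pM; rewrite ?normr_ge0 ?mulr_ge0 ?normr_ge0.
rewrite le_eqVlt; apply/orP; left; apply/eqP.
rewrite /K !exprS; ring.
Qed.
Arguments D_bound {F C w s} j.

Lemma poly_bound (F : numFieldType) (C w s : F) (P : {poly F}) a j M :
  0 <= C -> 1 <= `|w| -> `|s| <= C -> (size P <= j.+1)%N -> (a + j)%N = M ->
  `| w^+a * P.[w+s] * w - P`_j * w^+M.+1 |
    <= (\sum_(i < j.+1) `|P`_i| * (1 + C)^+i) * `|w|^+M.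
Proof.
move=> C0 w1 sC sP aM.
have x0 : 0 <= `|w| by [].
have C1 : 1 <= 1 + C by rewrite lerDl.
have ws : `|w + s| <= (1 + C) * `|w|.
  apply: le_trans (ler_normD _ _) _.
  rewrite mulrDl mul1r lerD2l.
  apply: le_trans sC _.
  by rewrite -{1}(mulr1 C) ler_wpM2l.
rewrite (horner_coef_wide _ sP) big_ord_recr /=.
have -> : w ^+ a * (\sum_(i < j) P`_i * (w + s) ^+ i + P`_j * (w + s) ^+ j) * w -
    P`_j * w ^+ M.+1 =
  \sum_(i < j) (P`_i * (w^+a * (w + s) ^+ i * w)) +
   P`_j * (w^+a * ((w+s)^+j - w^+j) * w).
  rewrite mulrDr mulrDl -addrA; congr (_ + _).
    by rewrite big_distrr big_distrl; apply: eq_bigr => i _ /=; ring.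
  by rewrite -aM exprS exprD; ring.
rewrite big_ord_recr /= mulrDl.
apply: le_trans (ler_normD _ _) _.
apply: lerD.
  apply: le_trans (ler_norm_sum _ _ _) _.
  rewrite mulr_suml; apply: ler_sum => i _.
  rewrite normrM -[X in _ <= X]mulrA; apply: ler_wpM2l => //.
  rewrite !normrM !normrX.
  apply: (le_trans (y := `|w| ^+ a * ((1 + C)^+i * `|w|^+i) * `|w|)).
    rewrite ler_wpM2r // ler_wpM2l ?exprn_ge0 //.
    rewrite -exprMn; apply: lerXn2r; rewrite ?nnegrE ?mulr_ge0 //.
    by apply: le_trans C1.
  have -> : `|w| ^+ a * ((1 + C) ^+ i * `|w| ^+ i) * `|w| =
     (1 + C) ^+ i * `|w| ^+ (a + i).+1 by rewrite exprS exprD; ring.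
  rewrite ler_wpM2l ?exprn_ge0 ?(le_trans _ C1) //.
  apply: ler_weXn2l => //.
  have := ltn_ord i; rewrite -aM; lia.
rewrite normrM -[X in _ <= X]mulrA; apply: ler_wpM2l => //.
rewrite !normrM !normrX -mulrA.
have -> : (1 + C) ^+ j * `|w| ^+ M = `|w| ^+ a * ((1 + C) ^+ j * `|w| ^+ j).
  by rewrite -aM exprD; ring.
apply: ler_wpM2l; first by rewrite exprn_ge0.
apply: le_trans (D_bound j C0 w1 sC) _.
by rewrite ler_wpM2r ?exprn_ge0 // lerBlDr lerDl.
Qed.

Lemma analytic (F : numFieldType) (C : F) (P : nat -> {poly F}) (g : nat -> F) n e m :
  0 <= C -> (forall k, (k <= m)%N -> (size (P k) <= (k+e).+1 - n)%N) ->
  \sum_(k < m.+1) g k * (P k)`_(k+e-n) != 0 ->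
  exists w : F, forall s, `|s| <= C ->
    \sum_(k < m.+1) g k * (w^+(m-k) * (P k).[w+s]) != 0.
Proof.
move=> C0 sP.
set A := \sum_(k < m.+1) _ => A0.
set Kp := fun k => \sum_(i < (k+e-n).+1) `|(P k)`_i| * (1 + C)^+i.
set K := \sum_(k < m.+1) `|g k| * Kp k.
have C1 : 1 <= 1 + C by rewrite lerDl.
have Kp0 : forall k, 0 <= Kp k.
  move=> k; apply: sumr_ge0 => i _; rewrite mulr_ge0 ?exprn_ge0 //.
  exact: le_trans C1.
have K0 : 0 <= K by apply: sumr_ge0 => k _; rewrite mulr_ge0.
have nA : 0 < `|A| by rewrite normr_gt0.
exists (1 + K / `|A|) => s sC.
set w := 1 + K / `|A|.
have w0 : 0 <= K / `|A| by rewrite divr_ge0 // ltW.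
have xw : `|w| = w by rewrite ger0_norm // addr_ge0.
have w1 : 1 <= `|w| by rewrite xw lerDl.
set M := (m + e - n)%N.
apply/negP => /eqP Q0.
have keyG : forall Q, Q = \sum_(k < m.+1) g k * (w ^+ (m - k) * (P k).[w + s]) ->
   `|Q * w - A * w^+M.+1| <= K * `|w|^+M.
  move=> Q ->.
  apply: (le_trans (y := `|\sum_(k < m.+1) g k * (w ^+ (m - k) * (P k).[w + s] * w - (P k)`_(k+e-n) * w^+M.+1)|)).
    rewrite le_eqVlt; apply/orP; left; apply/eqP; congr `|_|.
    rewrite /A !big_distrl /= -sumrB; apply: eq_bigr => k _; ring.
  apply: le_trans (ler_norm_sum _ _ _) _.
  rewrite /K mulr_suml; apply: ler_sum => k _.
  rewrite normrM -[X in _ <= X]mulrA; apply: ler_wpM2l => //.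
  have [->|Pk0] := eqVneq (P k) 0.
    by rewrite horner0 coef0 !mul0r mulr0 mul0r subrr normr0 mulr_ge0 ?exprn_ge0.
  have kle : (k <= m)%N by rewrite -ltnS.
  have := sP _ kle; have : (0 < size (P k))%N by rewrite size_poly_gt0.
  move=> s1 s2.
  apply: poly_bound => //; lia.
have key := keyG 0 (esym Q0).
rewrite mul0r sub0r normrN normrM normrX xw in key.
have wM : 0 < w ^+ M by rewrite exprn_gt0 // (lt_le_trans ltr01) // -xw.
rewrite exprS mulrA -xw ler_pM2r ?xw // in key.
move: key; rewrite /w mulrDr mulr1 mulrC divfK ?gt_eqF // gerDr => key.
by move: (lt_le_trans nA key); rewrite ltxx.
Qed.
Lemma phiE (F : numFieldType) k : k`!%:R *: phi F k = 'X^k.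
Proof. by rewrite /phi scalerA mulfV ?scale1r // pnatr_eq0 -lt0n fact_gt0. Qed.

Lemma expand (F : numFieldType) (p : {poly F}) N : (size p <= N.+1)%N ->
  p = \sum_(k < N.+1) (p`_k * k`!%:R) *: phi F k.
Proof.
move=> sp.
under eq_bigr do rewrite -scalerA phiE.
rewrite -poly_def; apply/polyP => j; rewrite coef_poly.
case: ifP => // /negbT; rewrite -leqNgt => hj.
by rewrite nth_default // (leq_trans sp).
Qed.

Lemma size_sum_phi (F : numFieldType) j (a : nat -> F) :
  (size (\sum_(k < j) a k *: phi F k)%R <= j)%N.
Proof.
elim: j => [|j IH]; first by rewrite big_ord0 size_poly0.
rewrite big_ord_recr /=.
apply: leq_trans (size_polyD _ _) _; rewrite geq_max (leq_trans IH) //.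
apply: leq_trans (size_scale_leq _ _) _.
by apply: leq_trans (size_scale_leq _ _) _; rewrite size_polyXn.
Qed.

Lemma Tlin_sum (F : numFieldType) n (T : {poly F} -> {poly F}) :
  (forall (a : F) p q, inPn n p -> inPn n q -> T (a *: p + q) = a *: T p + T q) ->
  forall j (a : nat -> F), (j <= n.+1)%N ->
  T (\sum_(k < j) a k *: phi F k) = \sum_(k < j) a k *: T (phi F k).
Proof.
move=> Hl.
have T0 : T 0 = 0.
  have := Hl 1 0 0; rewrite /inPn size_poly0 scale1r addr0 => /(_ isT isT) E.
  by move: E; rewrite scale1r => E; apply/esym; apply: (addrI (T 0)); rewrite addr0 -E.
elim=> [|j IH] a hj; first by rewrite !big_ord0.
rewrite !big_ord_recr /= addrC Hl ?IH 1?addrC //; last first.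
  by rewrite /inPn (leq_trans (size_sum_phi _ _ _)) // ltnW.
rewrite /inPn; apply: leq_trans (size_scale_leq _ _) _.
  by rewrite size_polyXn.
by rewrite ltnW.
Qed.

Lemma binom_phi (F : numFieldType) (w : F) m :
  ('X - w%:P)^+m = \sum_(i < m.+1) ((-w)^+(m-i) * 'C(m,i)%:R * i`!%:R) *: phi F i.
Proof.
rewrite addrC exprDn; apply: eq_bigr => i _.
rewrite -scalerA phiE -mul_polyC -mulrnAl; congr (_ * _).
by rewrite -(rmorphN polyC) -rmorphXn -rmorphMn /= mulr_natr.
Qed.

Lemma comb (F : comNzRingType) (b : nat -> F) n :
  (forall m, (1 <= m <= n)%N ->
     \sum_(k < m.+1) ((-1)^+(m-k) * 'C(m,k)%:R) * b k = 0) ->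
  forall k, (k <= n)%N -> b k = b 0%N.
Proof.
move=> H k; elim/ltn_ind: k => k IH kn.
case: k IH kn => [//|m] IH kn.
have := H m.+1; rewrite kn /= => /(_ isT).
rewrite big_ord_recr /= subnn expr0 mul1r binn mul1r.
rewrite (eq_bigr (fun k : 'I_m.+1 => ((-1)^+(m.+1-k) * 'C(m.+1,k)%:R) * b 0%N)); last first.
  by move=> i _; rewrite IH // (leq_trans _ kn) // ltnW.
rewrite -big_distrl /=.
have : \sum_(i < m.+2) (-1 : F)^+(m.+1 - i) * 'C(m.+1, i)%:R = 0.
  have := exprDn (-1 : F) 1 m.+1; rewrite addNr expr0n /=.
  move=> /esym E; rewrite -[RHS]E; apply: eq_bigr => i _.
  by rewrite expr1n mulr1 mulr_natr.
rewrite big_ord_recr /= subnn expr0 binn mul1r => /eqP; rewrite addr_eq0 => /eqP ->.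
by rewrite mulN1r addrC => /eqP; rewrite subr_eq0 => /eqP.
Qed.

Lemma size_le_coef (F : numFieldType) (p : {poly F}) j :
  (size p <= j.+1)%N -> p`_j = 0 -> (size p <= j)%N.
Proof.
move=> s c; rewrite leq_eqVlt in s; case/orP: s => [/eqP s|]; last by [].
have : p != 0 by rewrite -size_poly_gt0 s.
by rewrite -lead_coef_eq0 /lead_coef s /= c eqxx.
Qed.

Lemma coef_neq0_size (F : numFieldType) (p : {poly F}) j :
  p`_j != 0 -> (j < size p)%N.
Proof.
apply: contraR; rewrite -leqNgt => h.
by rewrite nth_default.
Qed.

Theorem mainTheorem9 (R : realType) (n : nat) (T : {poly R[i]} -> {poly R[i]})
  (Cst : R) :
  (1 <= n)%N ->
  (* T maps P_n into P_n and is linear on P_n *)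
  (forall p, inPn n p -> inPn n (T p)) ->
  (forall (a : R[i]) p q, inPn n p -> inPn n q -> T (a *: p + q) = a *: T p + T q) ->
  (* T <> 0 *)
  (exists p, inPn n p /\ T p != 0) ->
  0 < Cst ->
  (forall f, inPn n f -> (1 < size f)%N ->
     exists u v, root f u /\ root (T f) v /\ `|u - v| <= (Cst%:C)%C) ->
  exists c : R[i], c != 0 /\ T (phi _ 0) = c%:P /\
    forall m : nat, (m <= n)%N ->
      exists a : nat -> R[i],
        T (phi _ m) = \sum_(k < m.+1) a k *: phi _ k /\ a m = c.
Proof.
move=> n1 HP Hl [p0 [p0P Tp0]] C0 Hroot.
pose P k := T (phi R[i] k).
have PP : forall k, (k <= n)%N -> inPn n (P k).
  move=> k kn; apply: HP; rewrite /inPn /phi.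
  by apply: leq_trans (size_scale_leq _ _) _; rewrite size_polyXn.
have Texp : forall p, inPn n p -> T p = \sum_(k < n.+1) (p`_k * k`!%:R) *: P k.
  by move=> p pP; rewrite {1}(@expand R[i] p n pP); exact: (@Tlin_sum R[i] n T Hl n.+1 (fun k => p`_k * k`!%:R) (leqnn _)).
pose H e := [forall k : 'I_n.+1, (size (P k) <= (k+e).+1 - n)%N].
have exH : exists e, H e.
  exists (2*n)%N; apply/forallP => k.
  have := PP k (leq_ord k); rewrite /inPn; move: (size (P k)) => s; lia.
have [e He emin] := ex_minnP exH.
have Hek : forall k, (k <= n)%N -> (size (P k) <= (k+e).+1 - n)%N.
  by move=> k kn; exact: (forallP He (Ordinal (kn : (k < n.+1)%N))).
pose d k := (P k)`_(k+e-n).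
have dnz : exists2 k, (k <= n)%N & d k != 0.
  case: (boolP [exists k : 'I_n.+1, d k != 0]) => [/existsP [k kd]|/existsPn Hn].
    by exists k; rewrite ?leq_ord.
  exfalso.
  have sz : forall k, (k <= n)%N -> (size (P k) <= k + e - n)%N.
    move=> k kn; have := Hn (Ordinal (kn : (k < n.+1)%N)); rewrite negbK /= => /eqP dk.
    apply: size_le_coef dk; have := Hek k kn; move: (size (P k)) => s; lia.
  case: e He emin Hek d Hn sz => [|e] He emin Hek d Hn sz.
    have := Texp p0 p0P; rewrite big1 => [E|k _]; first by rewrite E eqxx in Tp0.
    have : (size (P k) <= 0)%N.
      by have := sz k (leq_ord k); have := leq_ord k; move: (size (P k)) (nat_of_ord k) => s kk; lia.
    rewrite size_poly_leq0 => /eqP ->.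
    by rewrite scaler0.
  have : H e.
    apply/forallP => k; have := sz k (leq_ord k); move: (size (P k)) => s; lia.
  by move/emin; rewrite ltnn.
have Cge : 0 <= (Cst%:C)%C :> R[i] by rewrite ler0c ltW.
have Am : forall m, (1 <= m <= n)%N ->
    \sum_(k < m.+1) ((-1)^+(m-k) * 'C(m,k)%:R) * (k`!%:R * d k) = 0 :> R[i].
  move=> m /andP [m1 mn]; apply/eqP; apply: contraT => A0.
  pose g k := (-1)^+(m-k) * 'C(m,k)%:R * k`!%:R : R[i].
  have A0' : \sum_(k < m.+1) g k * (P k)`_(k+e-n) != 0.
    suff -> : \sum_(k < m.+1) g k * (P k)`_(k+e-n) =
       \sum_(k < m.+1) ((-1)^+(m-k) * 'C(m,k)%:R) * (k`!%:R * d k) by [].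
    by apply: eq_bigr => k _; rewrite /g /d !mulrA.
  have sP : forall k, (k <= m)%N -> (size (P k) <= (k+e).+1 - n)%N.
    by move=> k km; apply: Hek; apply: leq_trans mn.
  have [w Hw] := @analytic R[i] _ P g n e m Cge sP A0'.
  pose f := ('X - w%:P)^+m.
  have fP : inPn n f by rewrite /inPn size_exp_XsubC.
  have f1 : (1 < size f)%N by rewrite size_exp_XsubC ltnS.
  have [u [v [fu [Tv uv]]]] := Hroot f fP f1.
  have uw : u = w.
    move: fu; rewrite /root horner_exp hornerXsubC expf_eq0 subr_eq0.
    by case/andP => _ /eqP.
  have := Hw (v - w); rewrite -uw distrC => /(_ uv) /negP HH; exfalso; apply: HH.
  rewrite uw addrC subrK.
  move: Tv; rewrite /f binom_phi.
  have mn' : (m.+1 <= n.+1)%N by [].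
  rewrite (@Tlin_sum R[i] n T Hl m.+1 (fun i => (-w)^+(m-i) * 'C(m,i)%:R * i`!%:R) mn').
  rewrite /root horner_sum => /eqP E2; apply/eqP; apply: (etrans _ E2).
  by apply: eq_bigr => k _; rewrite hornerZ /g (exprNn w); ring.
have bconst := @comb R[i] (fun k => k`!%:R * d k) n Am.
have fnz : forall k, (k`!%:R : R[i]) != 0.
  by move=> k; rewrite pnatr_eq0 -lt0n fact_gt0.
have [k0 k0n dk0] := dnz.
have d0nz : d 0%N != 0.
  apply: contra dk0 => /eqP d0; have := bconst k0 k0n; rewrite /= d0 mulr0 => /eqP.
  by rewrite mulf_eq0 (negbTE (fnz k0)).
have dnzall : forall k, (k <= n)%N -> d k != 0.
  move=> k kn; have := bconst k kn; rewrite /= fact0 mul1r => E.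
  apply: contra d0nz => /eqP dk; by rewrite -E dk mulr0.
have en : e = n.
  have h1 := @coef_neq0_size R[i] _ _ d0nz; have h2 := Hek 0%N (leq0n n).
  have h3 := @coef_neq0_size R[i] _ _ (dnzall n (leqnn n)); have := PP n (leqnn n); rewrite /inPn => h4.
  move: h1 h2 h3 h4; move: (size (P 0%N)) (size (P n)) => s1 s2; lia.
exists (d 0%N); split; first exact: d0nz.
split.
  have s0 : (size (P 0%N) <= 1)%N.
    by have := Hek 0%N (leq0n _); rewrite en; move: (size (P 0%N)) => s; lia.
  by apply: (etrans (size1_polyC s0)); rewrite /d en add0n subnn.
move=> m mn; exists (fun k => (P m)`_k * k`!%:R); split.
  have sm : (size (P m) <= m.+1)%N.
    by have := Hek m mn; rewrite en; move: (size (P m)) => s; lia.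
  exact: (@expand R[i] (P m) m sm).
have := bconst m mn; rewrite /= fact0 mul1r /d en addnK mulrC => ->.
by [].
Qed.
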